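(* Consider the closed loop defined in the context: the plant $x(k+1)=Ax(k)+Bu(k)+w(k)$; at every planning instant $k=k_pM$ the planning problem $\mathcal{P}(x(k_pM))$ is solved, giving an optimal solution with mode $i^\star$ and first planned state/input $x_p^\star(k_p|k_p),u_p^\star(k_p|k_p)$, from which the reference $x_{\text{ref}}(k_pM+j)=A^jx_p^\star(k_p|k_p)+\sum_{m=0}^{j-1}A^mBu_p^\star(k_p|k_p)$, $j=0,\dots,M$, is generated; at every time $k\in\{k_pM,\dots,k_pM+M-1\}$ the lower-layer problem $\mathcal{L}(x(k),\{x_{\text{ref}}\},i^\star,k)$ is solved and $u(k)=v^\star(k|k)$ is applied. Suppose Assumptions (A1)–(A4) hold. If the planning problem $\mathcal{P}(x(0))$ is feasible, then along the closed loop the planning problems $\mathcal{P}(x(k_pM))$ and the lower-layer problems $\mathcal{L}(x(k),\{x_{\text{ref}}\},i^\star,k)$ remain feasible for all $k_p\ge0$ and all $k\ge0$.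
   Context: System: $x(k+1)=Ax(k)+Bu(k)+w(k)$, $y(k)=Cx(k)$, with $x(k)\in\mathbb{R}^n$, $u(k)\in\mathbb{R}^m$, $y(k)\in\mathbb{R}^p$, unknown disturbance $w(k)\in\mathbb{R}^n$, closed convex constraint sets $\mathbb{X}\subseteq\mathbb{R}^n$, $\mathbb{U}\subseteq\mathbb{R}^m$. Obstacles: for $\ell=1,\dots,H$, $\mathbb{O}_\ell=\{y\in\mathbb{R}^p:E_\ell y<f_\ell\}$ (componentwise), $E_\ell\in\mathbb{R}^{q_\ell\times p}$, each the interior of a compact convex polytope; $\mathbb{O}=\bigcup_\ell\mathbb{O}_\ell$. Notation: $\mathbb{X}\oplus\mathbb{Y}=\{x+y:x\in\mathbb{X},y\in\mathbb{Y}\}$, $\mathbb{X}\ominus\mathbb{Y}=\{x:\{x\}\oplus\mathbb{Y}\subseteq\mathbb{X}\}$, $G\mathbb{S}=\{Gs:s\in\mathbb{S}\}$; $\operatorname{rem}(k,M)$ is the remainder of $k$ divided by $M$; $\|x\|_Q^2=x^\top Qx$. Modes: $N_w$ modes; for each $i$, $\mathbb{X}_i\subseteq\mathbb{X}$, $\mathbb{U}_i\subseteq\mathbb{U}$ closed convex polytopes, $\mathbb{W}_i$ compact convex polytope. (A1): if $x(k)\in\mathbb{X}_i$ and $u(k)\in\mathbb{U}_i$ then $w(k)\in\mathbb{W}_i$. $K\in\mathbb{R}^{m\times n}$ with $A+BK$ Schur stable; $\mathbb{Z}_i$ compact convex polytopes with $(A+BK)\mathbb{Z}_i\oplus\mathbb{W}_i\subseteq\mathbb{Z}_i$;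 $\mathbb{E}_i(0)=\{0\}$, $\mathbb{E}_i(j+1)=(A+BK)\mathbb{E}_i(j)\oplus\mathbb{W}_i$. $M>1$ integer, $A_p=A^M$, $B_p=\sum_{i=0}^{M-1}A^iB$. (A2): $(A,B)$ and $(A_p,B_p)$ controllable. (A3) Inter-sample sets $\mathbb{I}_i\subseteq\mathbb{R}^n\times\mathbb{R}^m$: if $(x_p,u_p)\in\mathbb{I}_i$ then for $\ell=1,\dots,M-1$: $A^\ell x_p+\sum_{m=0}^{\ell-1}A^mBu_p\in\mathbb{X}_i\ominus\mathbb{Z}_i$ and $C(A^\ell x_p+\sum_{m=0}^{\ell-1}A^mBu_p)\notin\mathbb{O}\oplus(-C)\mathbb{Z}_i$. (A4) Terminal sets $\mathbb{X}^f_i$ and maps $\kappa^f_i$: $x_p\in\mathbb{X}^f_i$ implies $A_px_p+B_p\kappa^f_i(x_p)\in\mathbb{X}^f_i$, $x_p\in\mathbb{X}_i\ominus\mathbb{Z}_i$, $\kappa^f_i(x_p)\in\mathbb{U}_i\ominus K\mathbb{Z}_i$, $(x_p,\kappa^f_i(x_p))\in\mathbb{I}_i$, $Cx_p\notin\mathbb{O}\oplus(-C)\mathbb{Z}_i$. Planning problem $\mathcal{P}(\xi)$ at planning index $k_p$, $\xi=x(k_pM)$, horizon $N$, weights $\alpha_x,\alpha_u\ge0$, goal $x_{\text{goal}}$: minimize over $x_p(k_p+j|k_p)$ ($j=0,\dots,N$), $u_p(k_p+j|k_p)$ ($j=0,\dots,N-1$), $i$ the cost $\|x_{\text{goal}}-x_p(k_p+N|k_p)\|_\infty+\sum_{j=0}^{N-1}(\alpha_x\|x_p(k_p+j|k_p)\|_\infty+\alpha_u\|u_p(k_p+j|k_p)\|_\infty)$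 subject to $i\in\{1,\dots,N_w\}$, $\xi-x_p(k_p|k_p)\in\mathbb{Z}_i$, and for all $j\in\{0,\dots,N-1\}$: $x_p(k_p+j+1|k_p)=A_px_p(k_p+j|k_p)+B_pu_p(k_p+j|k_p)$, $x_p(k_p+j|k_p)\in\mathbb{X}_i\ominus\mathbb{Z}_i$, $u_p(k_p+j|k_p)\in\mathbb{U}_i\ominus K\mathbb{Z}_i$, $Cx_p(k_p+j|k_p)\notin\mathbb{O}\oplus(-C)\mathbb{Z}_i$, $(x_p(k_p+j|k_p),u_p(k_p+j|k_p))\in\mathbb{I}_i$; and $x_p(k_p+N|k_p)\in\mathbb{X}^f_i$. Lower-layer problem $\mathcal{L}(x(k),\{x_{\text{ref}}\},i,k)$: with $L_k=M-\operatorname{rem}(k,M)$, minimize over $z(k+j|k)$ ($j=0,\dots,L_k$), $v(k+j|k)$ ($j=0,\dots,L_k-1$) the cost $\sum_{j=k}^{k+L_k-1}(\|x_{\text{ref}}(j)-z(j|k)\|_Q^2+\|v(j|k)\|_R^2)+\|x_{\text{ref}}(k+L_k)-z(k+L_k|k)\|_P^2$ ($Q,P,R$ positive definite) subject to $z(k|k)=x(k)$, $z(k+j+1|k)=Az(k+j|k)+Bv(k+j|k)$, and for the relevant $j$: $z(k+j|k)\in\mathbb{X}_i\ominus\mathbb{E}_i(j)$, $v(k+j|k)\in\mathbb{U}_i\ominus K\mathbb{E}_i(j)$, $C(z(k+j|k)-x_{\text{ref}}(k+j))\in C(\mathbb{Z}_i\ominus\mathbb{E}_i(j))$, and $z(k+L_k|k)-x_{\text{ref}}(k+L_k)\in\mathbb{Z}_i\ominus\mathbb{E}_i(L_k)$.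 Its optimal input sequence is denoted $v^\star(\cdot|k)$. *)

(* Defs.v *)
From HB Require Import structures.
From mathcomp Require Import all_boot all_order all_algebra.
From mathcomp Require Import all_classical all_reals all_analysis.
From mathcomp Require Import complex.
Set Implicit Arguments. Unset Strict Implicit. Unset Printing Implicit Defensive.
Import Order.TTheory GRing.Theory Num.Theory.
Local Open Scope ring_scope.
Local Open Scope classical_set_scope.

Section Defs.
Variable R : realType.

(* Subsets of R^n (column vectors). [R^o] only selects the canonical
   topology on matrices; 'cV[R^o]_n and 'cV[R]_n are convertible. *)
Definition vset (n : nat) := set 'cV[R^o]_n.

Definition msum n (S T : vset n) : vset n :=
  [set z | exists x y, S x /\ T y /\ z = x + y].
Definition pdiff n (S T : vset n) : vset n :=
  [set x | forall y, T y -> S (x + y)].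
Definition limg n k (G : 'M[R]_(k, n)) (S : vset n) : vset k :=
  [set z | exists s : 'cV[R]_n, S s /\ z = G *m s].

Definition convex_set n (S : vset n) :=
  forall x y : 'cV[R]_n, S x -> S y ->
  forall t : R, 0 <= t <= 1 -> S (t *: x + (1 - t) *: y).

Definition polytope n (S : vset n) :=
  exists (q : nat) (F : 'M[R]_(q, n)) (g : 'cV[R]_q),
    forall x : 'cV[R]_n, S x <-> (forall j : 'I_q, (F *m x) j 0 <= g j 0).

Definition obst p q (E : 'M[R]_(q, p)) (f : 'cV[R]_q) : vset p :=
  [set y | forall j : 'I_q, (E *m y) j 0 < f j 0].

Definition schur_stable n (A : 'M[R]_n) :=
  forall l : R[i], root (char_poly (map_mx (real_complex R) A)) l -> `|l| < 1.

Definition controllable n m (A : 'M[R]_n) (B : 'M[R]_(n, m)) :=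
  \rank (\mxrow_(k < n) (A ^+ k *m B)) = n.

Definition posdef n (Q : 'M[R]_n) :=
  Q^T = Q /\ forall v : 'cV[R]_n, v != 0 -> 0 < (v^T *m Q *m v) 0 0.

Definition qnorm n (Q : 'M[R]_n) (v : 'cV[R]_n) : R := (v^T *m Q *m v) 0 0.

Definition ninf n (v : 'cV[R]_n) : R := \big[Num.max/0]_(j < n) `|v j 0|.

Definition propagate n m (A : 'M[R]_n) (B : 'M[R]_(n, m))
  (x : 'cV[R]_n) (u : 'cV[R]_m) (l : nat) : 'cV[R]_n :=
  A ^+ l *m x + \sum_(j < l) (A ^+ j *m B *m u).

Fixpoint Eset n (Acl : 'M[R]_n) (W : vset n) (j : nat) : vset n :=
  match j with
  | 0 => [set 0]
  | j'.+1 => msum (limg Acl (Eset Acl W j')) W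
  end.

End Defs.

Unset Implicit Arguments.
Record data (R : realType) := Data {
  dn : nat; dm : nat; dp : nat;
  dA : 'M[R]_dn; dB : 'M[R]_(dn, dm); dC : 'M[R]_(dp, dn);
  dX : vset R dn; dU : vset R dm;
  (* obstacles O_l = {y : E_l y < f_l}, l in 'I_H *)
  dH : nat; dq : 'I_dH -> nat;
  dE : forall l : 'I_dH, 'M[R]_(dq l, dp);
  df : forall l : 'I_dH, 'cV[R]_(dq l);
  dNw : nat;
  dXs : 'I_dNw -> vset R dn; dUs : 'I_dNw -> vset R dm;
  dWs : 'I_dNw -> vset R dn;
  dK : 'M[R]_(dm, dn); dZs : 'I_dNw -> vset R dn;
  dM : nat;
  dIs : 'I_dNw -> set ('cV[R]_dn * 'cV[R]_dm);
  dXf : 'I_dNw -> vset R dn; dkf : 'I_dNw -> 'cV[R]_dn -> 'cV[R]_dm;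
  dN : nat; dax : R; dau : R; dxgoal : 'cV[R]_dn;
  dQ : 'M[R]_dn; dP : 'M[R]_dn; dR : 'M[R]_dm
}.

Arguments dn {R}. Arguments dm {R}. Arguments dp {R}. Arguments dA {R}. Arguments dB {R}.
Arguments dC {R}. Arguments dX {R}. Arguments dU {R}. Arguments dH {R}. Arguments dq {R}.
Arguments dE {R}. Arguments df {R}. Arguments dNw {R}. Arguments dXs {R}. Arguments dUs {R}.
Arguments dWs {R}. Arguments dK {R}. Arguments dZs {R}. Arguments dM {R}. Arguments dIs {R}.
Arguments dXf {R}. Arguments dkf {R}. Arguments dN {R}. Arguments dax {R}. Arguments dau {R}.
Arguments dxgoal {R}. Arguments dQ {R}. Arguments dP {R}. Arguments dR {R}.
Set Implicit Arguments.

Unset Implicit Arguments.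
Section Problem.
Context {R : realType} (D : data R).

Local Notation n := (dn D). Local Notation m := (dm D).
Local Notation A := (dA D). Local Notation B := (dB D). Local Notation C := (dC D).
Local Notation M := (dM D).

Definition Acl : 'M[R]_n := A + B *m dK D.
Definition Ap : 'M[R]_n := A ^+ M.
Definition Bp : 'M[R]_(n, m) := \sum_(j < M) (A ^+ j *m B).

Definition Obs : vset R (dp D) := [set y | exists l, obst (dE D l) (df D l) y].

Definition Obs_Z (i : 'I_(dNw D)) : vset R (dp D) := msum Obs (limg (- C) (dZs D i)).

Definition Es (i : 'I_(dNw D)) (j : nat) : vset R n := Eset Acl (dWs D i) j.

Definition standing :=
  (closed (dX D) /\ convex_set (dX D)) /\
  (closed (dU D) /\ convex_set (dU D)) /\
  (forall l, exists Pl : vset R (dp D),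
      polytope Pl /\ compact Pl /\ obst (dE D l) (df D l) = Pl°) /\
  (forall i, dXs D i `<=` dX D /\ closed (dXs D i) /\ polytope (dXs D i)) /\
  (forall i, dUs D i `<=` dU D /\ closed (dUs D i) /\ polytope (dUs D i)) /\
  (forall i, compact (dWs D i) /\ polytope (dWs D i)) /\
  schur_stable Acl /\
  (forall i, [/\ compact (dZs D i), polytope (dZs D i) &
                msum (limg Acl (dZs D i)) (dWs D i) `<=` dZs D i]) /\
  (1 < M)%N /\ (0 < dN D)%N /\ 0 <= dax D /\ 0 <= dau D /\
  posdef (dQ D) /\ posdef (dP D) /\ posdef (dR D).

Definition A2 := controllable A B /\ controllable Ap Bp.

Definition A3 :=
  forall i xp up, dIs D i (xp, up) ->
  forall l : nat, (1 <= l <= M - 1)%N ->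
    pdiff (dXs D i) (dZs D i) (propagate A B xp up l) /\
    ~ Obs_Z i (C *m propagate A B xp up l).

Definition A4 :=
  forall i xp, dXf D i xp ->
    [/\ dXf D i (Ap *m xp + Bp *m dkf D i xp),
        pdiff (dXs D i) (dZs D i) xp,
        pdiff (dUs D i) (limg (dK D) (dZs D i)) (dkf D i xp),
        dIs D i (xp, dkf D i xp) &
        ~ Obs_Z i (C *m xp)].

(* xs j stands for x_p(k_p+j|k_p) (j = 0..N), us j for u_p(k_p+j|k_p) (j < N) *)
Definition plan_constr (xi : 'cV[R]_n) (i : 'I_(dNw D))
    (xs : nat -> 'cV[R]_n) (us : nat -> 'cV[R]_m) :=
  dZs D i (xi - xs 0%N) /\
  (forall j, (j < dN D)%N ->
     [/\ xs j.+1 = Ap *m xs j + Bp *m us j,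
         pdiff (dXs D i) (dZs D i) (xs j),
         pdiff (dUs D i) (limg (dK D) (dZs D i)) (us j),
         ~ Obs_Z i (C *m xs j) &
         dIs D i (xs j, us j)]) /\
  dXf D i (xs (dN D)).

Definition plan_cost (xs : nat -> 'cV[R]_n) (us : nat -> 'cV[R]_m) : R :=
  ninf (dxgoal D - xs (dN D)) +
  \sum_(j < dN D) (dax D * ninf (xs j) + dau D * ninf (us j)).

Definition plan_feasible (xi : 'cV[R]_n) :=
  exists i xs us, plan_constr xi i xs us.

Definition plan_optimal (xi : 'cV[R]_n) i xs us :=
  plan_constr xi i xs us /\
  forall i' xs' us', plan_constr xi i' xs' us' -> plan_cost xs us <= plan_cost xs' us'.

(* xref is indexed by absolute time; zs j stands for z(k+j|k), vs j for v(k+j|k) *)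
Definition Lk (k : nat) : nat := (M - k %% M)%N.

Definition lower_constr (x : 'cV[R]_n) (xref : nat -> 'cV[R]_n)
    (i : 'I_(dNw D)) (k : nat) (zs : nat -> 'cV[R]_n) (vs : nat -> 'cV[R]_m) :=
  zs 0%N = x /\
  (forall j, (j < Lk k)%N ->
     [/\ zs j.+1 = A *m zs j + B *m vs j,
         pdiff (dXs D i) (Es i j) (zs j),
         pdiff (dUs D i) (limg (dK D) (Es i j)) (vs j) &
         limg C (pdiff (dZs D i) (Es i j)) (C *m (zs j - xref (k + j)%N))]) /\
  pdiff (dZs D i) (Es i (Lk k)) (zs (Lk k) - xref (k + Lk k)%N).

Definition lower_cost (xref : nat -> 'cV[R]_n) (k : nat)
    (zs : nat -> 'cV[R]_n) (vs : nat -> 'cV[R]_m) : R :=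
  \sum_(j < Lk k) (qnorm (dQ D) (xref (k + j)%N - zs j) + qnorm (dR D) (vs j)) +
  qnorm (dP D) (xref (k + Lk k)%N - zs (Lk k)).

Definition lower_feasible x xref i k := exists zs vs, lower_constr x xref i k zs vs.

Definition lower_optimal x xref i k zs vs :=
  lower_constr x xref i k zs vs /\
  forall zs' vs', lower_constr x xref i k zs' vs' ->
    lower_cost xref k zs vs <= lower_cost xref k zs' vs'.

Definition xref_of (kp : nat) (x0 : 'cV[R]_n) (u0 : 'cV[R]_m) : nat -> 'cV[R]_n :=
  fun t => propagate A B x0 u0 (t - kp * M)%N.

End Problem.

(* Main.v *)
Require Import Defs.
From HB Require Import structures.
From mathcomp Require Import all_boot all_order all_algebra.
From mathcomp Require Import all_classical all_reals all_analysis.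
From mathcomp Require Import complex.
Import Order.TTheory GRing.Theory Num.Theory.
Set Implicit Arguments.
Local Open Scope ring_scope.
Local Open Scope classical_set_scope.
Local Notation limg := Defs.limg.
Local Notation msum := Defs.msum.
Local Notation pdiff := Defs.pdiff.

Lemma E_inv (R : realType) (D : data R) (i : 'I_(dNw D)) :
  msum (limg (Acl D) (dZs D i)) (dWs D i) `<=` dZs D i ->
  forall j (e y : 'cV[R]_(dn D)), dZs D i e -> Es D i j y ->
  dZs D i (Acl D ^+ j *m e + y).
Proof.
move=> HZ; elim=> [|j IH] e y Ze.
  rewrite /Es /= => ->. by rewrite expr0 mul1mx addr0.
rewrite /Es /= => -[y1 [w [[s [Es' ->]] [Ww ->]]]].
apply: HZ; exists (Acl D *m (Acl D ^+ j *m e + s)), w; split; last split => //.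
  exists (Acl D ^+ j *m e + s); split => //; exact: IH.
by rewrite exprS -mulmxE mulmxDr mulmxA addrA.
Qed.

Lemma E_shift (R : realType) (D : data R) (i : 'I_(dNw D)) :
  forall j (e w : 'cV[R]_(dn D)), Es D i j e -> dWs D i w ->
  Es D i j.+1 (e + Acl D ^+ j *m w).
Proof.
elim=> [|j IH] e w.
  rewrite /Es /= => -> Ww. exists 0, w; split; first by exists 0; split => //; rewrite mulmx0.
  by split => //; rewrite expr0 mul1mx.
rewrite /Es /= => -[y1 [w' [[s [Es' ->]] [Ww' ->]]]] Ww.
exists (Acl D *m (s + Acl D ^+ j *m w)), w'; split.
  by exists (s + Acl D ^+ j *m w); split => //; exact: IH.
by split => //; rewrite exprS -mulmxE mulmxDr mulmxA addrAC.
Qed.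

Lemma st_facts (R : realType) (D : data R) : standing D ->
  (forall i, msum (limg (Acl D) (dZs D i)) (dWs D i) `<=` dZs D i) /\
  (1 < dM D)%N /\ (0 < dN D)%N.
Proof.
move=> [_ [_ [_ [_ [_ [_ [_ [HZ [HM [HN _]]]]]]]]]].
by split => [i|]; [case: (HZ i) | ].
Qed.

Lemma prop0 (R : realType) (D : data R) x0 u0 :
  propagate (dA D) (dB D) x0 u0 0 = x0.
Proof. by rewrite /propagate big_ord0 expr0 mul1mx addr0. Qed.

Lemma propS (R : realType) (D : data R) x0 u0 j :
  propagate (dA D) (dB D) x0 u0 j.+1 =
  dA D *m propagate (dA D) (dB D) x0 u0 j + dB D *m u0.
Proof.
rewrite /propagate big_ord_recl expr0 mul1mx mulmxDr mulmx_sumr exprS -mulmxE -mulmxA.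
have -> : \sum_(i < j) dA D ^+ (bump 0 i) *m dB D *m u0 =
          \sum_(i < j) dA D *m (dA D ^+ i *m dB D *m u0).
  by apply: eq_bigr => l _; rewrite /bump /= add1n exprS -mulmxE !mulmxA.
by rewrite [dB D *m u0 + _]addrC addrA.
Qed.

Lemma propM (R : realType) (D : data R) x0 u0 :
  propagate (dA D) (dB D) x0 u0 (dM D) = Ap D *m x0 + Bp D *m u0.
Proof. by rewrite /propagate /Ap /Bp mulmx_suml. Qed.
Lemma xrefE (R : realType) (D : data R) kp x0 u0 j :
  xref_of D kp x0 u0 (kp * dM D + j)%N = propagate (dA D) (dB D) x0 u0 j.
Proof. by rewrite /xref_of addKn. Qed.

Lemma dyn_alg (R : realType) (D : data R) (p a : 'cV[R]_(dn D)) (u0 : 'cV[R]_(dm D)) :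
  dA D *m p + dB D *m u0 + Acl D *m a =
  dA D *m (p + a) + dB D *m (u0 + dK D *m a).
Proof.
by rewrite /Acl mulmxDl !mulmxDr mulmxA addrACA.
Qed.

Lemma lower_start (R : realType) (D : data R) xi i xs us kp :
  standing D -> A3 D -> plan_constr D xi i xs us ->
  lower_feasible D xi (xref_of D kp (xs 0%N) (us 0%N)) i (kp * dM D).
Proof.
move=> /st_facts [HZ [HM HN]] HA3 [HxZ [Hc _]].
have [_ HX0 HU0 _ HI0] := Hc 0%N HN.
have LkE : Lk D (kp * dM D) = dM D by rewrite /Lk modnMl subn0.
set e := xi - xs 0%N.
exists (fun j => propagate (dA D) (dB D) (xs 0%N) (us 0%N) j + Acl D ^+ j *m e).
exists (fun j => us 0%N + dK D *m (Acl D ^+ j *m e)).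
have HXp : forall j, (j < dM D)%N ->
    pdiff (dXs D i) (dZs D i) (propagate (dA D) (dB D) (xs 0%N) (us 0%N) j).
  case=> [|j] Hj; first by rewrite prop0.
  by case: (HA3 i _ _ HI0 j.+1) => //; rewrite /= subn1 -ltnS prednK // ltnW.
rewrite /lower_constr LkE; split; [|split].
- by rewrite prop0 expr0 mul1mx /e addrC subrK.
- move=> j Hj; split.
  + by rewrite propS exprS -mulmxE -mulmxA dyn_alg.
  + move=> y Ey; rewrite -addrA; apply: HXp => //; exact: E_inv.
  + move=> y [s [Es' ->]]; rewrite -addrA -mulmxDr; apply: HU0.
    by exists (Acl D ^+ j *m e + s); split => //; exact: E_inv.
  + exists (Acl D ^+ j *m e); split; first by move=> y Ey; exact: E_inv.
    by rewrite xrefE addrAC subrr add0r.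
- rewrite xrefE addrAC subrr add0r; move=> y Ey; exact: E_inv.
Qed.

Lemma lower_XU (R : realType) (D : data R) x0 xref i k zs vs :
  (0 < Lk D k)%N -> lower_constr D x0 xref i k zs vs ->
  dXs D i x0 /\ dUs D i (vs 0%N).
Proof.
move=> HL [Hz0 [Hc _]]; have [_ HX HU _] := Hc 0%N HL.
split.
  have := HX 0 erefl; by rewrite addr0 Hz0.
have := HU 0; rewrite addr0; apply.
by exists 0; split; rewrite ?mulmx0.
Qed.

Lemma lower_end (R : realType) (D : data R) x0 xref i k zs vs w :
  Lk D k = 1%N -> lower_constr D x0 xref i k zs vs -> dWs D i w ->
  dZs D i (dA D *m x0 + dB D *m vs 0%N + w - xref (k + 1)%N).
Proof.
move=> HL [Hz0 [Hc Ht]] Ww; rewrite HL in Hc Ht.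
have [Hd _ _ _] := Hc 0%N erefl.
rewrite -Hz0 -Hd addrAC; apply: Ht.
exists 0, w; split; first by exists 0; split => //; rewrite mulmx0.
by rewrite add0r.
Qed.

Lemma lower_shift (R : realType) (D : data R) x0 xref i k L zs vs w :
  Lk D k = L.+1 -> Lk D k.+1 = L ->
  lower_constr D x0 xref i k zs vs -> dWs D i w ->
  lower_feasible D (dA D *m x0 + dB D *m vs 0%N + w) xref i k.+1.
Proof.
move=> HL HL' [Hz0 [Hc Ht]] Ww; rewrite HL in Hc Ht.
exists (fun j => zs j.+1 + Acl D ^+ j *m w).
exists (fun j => vs j.+1 + dK D *m (Acl D ^+ j *m w)).
rewrite /lower_constr HL'; split; [|split].
- have [Hd _ _ _] := Hc 0%N erefl.
  by rewrite /= expr0 mul1mx Hd Hz0.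
- move=> j Hj; have [Hd HX HU [s [Hs Hs']]] := Hc j.+1 Hj; split.
  + by rewrite Hd exprS -mulmxE -mulmxA dyn_alg.
  + move=> y Ey; rewrite -addrA (addrC _ y); apply: HX; exact: E_shift.
  + move=> y [s' [Es' ->]]; rewrite -addrA -mulmxDr (addrC _ s'); apply: HU.
    by exists (s' + Acl D ^+ j *m w); split => //; exact: E_shift.
  + exists (s + Acl D ^+ j *m w); split.
      move=> y Ey; rewrite -addrA (addrC _ y); apply: Hs; exact: E_shift.
    by rewrite addSnnS addrAC mulmxDr Hs' mulmxDr.
- rewrite addSnnS addrAC => y Ey; rewrite -(addrA (zs L.+1 - xref (k + L.+1)%N)) (addrC (Acl D ^+ L *m w) y); apply: Ht.
  exact: E_shift.
Qed.

Lemma plan_shift (R : realType) (D : data R) xi xi' i xs us :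
  standing D -> A4 D -> plan_constr D xi i xs us ->
  dZs D i (xi' - xs 1%N) -> plan_feasible D xi'.
Proof.
move=> /st_facts [_ [_ HN]] HA4 [_ [Hc Hf]] HZ.
have [H1 H2 H3 H4 H5] := HA4 i _ Hf.
exists i, (fun j => if (j < dN D)%N then xs j.+1
                    else Ap D *m xs (dN D) + Bp D *m dkf D i (xs (dN D))).
exists (fun j => if (j.+1 < dN D)%N then us j.+1 else dkf D i (xs (dN D))).
split; [|split].
- by rewrite /= HN.
- move=> j Hj; rewrite /= Hj; case: (ltnP j.+1 (dN D)) => Hj1.
    by have [? ? ? ? ?] := Hc j.+1 Hj1; split.
  have Ej : j.+1 = dN D by apply/eqP; rewrite eqn_leq Hj1 andbT.
  by rewrite Ej; split.
- by rewrite /= ltnn.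
Qed.

From mathcomp Require Import zify.
Unset Implicit Arguments.
Theorem proposition3 (R : realType) (D : data R) :
  standing D -> A2 D -> A3 D -> A4 D ->
  forall (x w : nat -> 'cV[R]_(dn D)) (u : nat -> 'cV[R]_(dm D))
         (istar : nat -> 'I_(dNw D))
         (xp : nat -> nat -> 'cV[R]_(dn D)) (up : nat -> nat -> 'cV[R]_(dm D))
         (zs : nat -> nat -> 'cV[R]_(dn D)) (vs : nat -> nat -> 'cV[R]_(dm D)),
  (* plant *)
  (forall k, x k.+1 = dA D *m x k + dB D *m u k + w k) ->
  (* (A1) along the closed loop *)
  (forall k (i : 'I_(dNw D)), dXs D i (x k) -> dUs D i (u k) -> dWs D i (w k)) ->
  (* planning layer: at k = k_p M an optimal solution of P(x(k_p M)) is used *)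
  (forall kp, plan_feasible D (x (kp * dM D)%N) ->
     plan_optimal D (x (kp * dM D)%N) (istar kp) (xp kp) (up kp)) ->
  (* lower layer: at each k an optimal solution of L(x(k),{x_ref},i*,k) is used
     and u(k) = v*(k|k) *)
  (forall k, let kp := (k %/ dM D)%N in
     let xref := xref_of D kp (xp kp 0%N) (up kp 0%N) in
     lower_feasible D (x k) xref (istar kp) k ->
     lower_optimal D (x k) xref (istar kp) k (zs k) (vs k) /\ u k = vs k 0%N) ->
  (* P(x(0)) feasible *)
  plan_feasible D (x 0%N) ->
  (forall kp, plan_feasible D (x (kp * dM D)%N)) /\
  (forall k, let kp := (k %/ dM D)%N in
     lower_feasible D (x k) (xref_of D kp (xp kp 0%N) (up kp 0%N)) (istar kp) k).
Proof.
Proof.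
move=> Hst HA2 HA3 HA4 x w u istar xp up zs vs Hplant HA1 Hopt Hlow H0.
have [HZ [HM HN]] := st_facts Hst.
have M0 : (0 < dM D)%N by apply: ltnW.
have divE : forall kp r, (r < dM D)%N -> ((kp * dM D + r) %/ dM D)%N = kp.
  by move=> kp r Hr; rewrite divnMDl // divn_small // addn0.
have LkE : forall kp r, (r < dM D)%N -> Lk D (kp * dM D + r)%N = (dM D - r)%N.
  by move=> kp r Hr; rewrite /Lk modnMDl modn_small.
have block : forall kp, plan_feasible D (x (kp * dM D)%N) -> forall r, (r < dM D)%N ->
   lower_feasible D (x (kp * dM D + r)%N) (xref_of D kp (xp kp 0%N) (up kp 0%N))
     (istar kp) (kp * dM D + r)%N.
  move=> kp Hf; have [Hc _] := Hopt kp Hf.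
  elim=> [|r IH] Hr.
    rewrite addn0; exact: lower_start Hst HA3 Hc.
  have Hr' : (r < dM D)%N by apply: ltnW.
  have := Hlow (kp * dM D + r)%N; rewrite /= divE // => /(_ (IH Hr')) [[Hlc _] Hu].
  have HL0 : (0 < Lk D (kp * dM D + r)%N)%N by rewrite LkE // subn_gt0.
  have [HX HU] := lower_XU HL0 Hlc.
  rewrite -Hu in HU; have Hw := HA1 _ _ HX HU.
  rewrite addnS Hplant Hu.
  apply: (@lower_shift _ _ _ _ _ _ (dM D - r.+1)%N _ _ _ _ _ Hlc Hw).
    by rewrite LkE // subnSK.
  by rewrite -addnS LkE.
have plan_all : forall kp, plan_feasible D (x (kp * dM D)%N).
  elim=> [|kp IH]; first by rewrite mul0n.
  have [Hc _] := Hopt kp IH.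
  have Hr : ((dM D).-1 < dM D)%N by rewrite ltn_predL.
  have := Hlow (kp * dM D + (dM D).-1)%N; rewrite /= divE //.
  move=> /(_ (block kp IH _ Hr)) [[Hlc _] Hu].
  have HL : Lk D (kp * dM D + (dM D).-1)%N = 1%N by rewrite LkE //; lia.
  have HL0 : (0 < Lk D (kp * dM D + (dM D).-1)%N)%N by rewrite HL.
  have [HX HU] := lower_XU HL0 Hlc.
  rewrite -Hu in HU; have Hw := HA1 _ _ HX HU.
  have Ex : xref_of D kp (xp kp 0%N) (up kp 0%N) (kp * dM D + (dM D).-1 + 1)%N = xp kp 1%N.
    rewrite -addnA addn1 prednK // xrefE propM.
    by have [Hd _ _ _ _] := Hc.2.1 0%N HN.
  have Ek : (kp * dM D + (dM D).-1).+1%N = (kp.+1 * dM D)%N by rewrite mulSn; lia.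
  have := @lower_end _ _ _ _ _ _ _ _ _ HL Hlc Hw; rewrite Ex -Hu -Hplant Ek => HZ'.
  exact: (@plan_shift _ _ _ _ _ _ _ Hst HA4 Hc HZ').
split => // k /=.
have := block (k %/ dM D)%N (plan_all _) (k %% dM D)%N (ltn_pmod k M0).
by rewrite -divn_eq.
Qed.
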